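(* Let $n\geq 10^6$ and let $K_{2n+1}$ be ND-coloured. Let $T$ be a tree on $n+1$ vertices containing a vertex $v_1$ which is adjacent to at least $2n/3$ leaves. Then $K_{2n+1}$ contains a rainbow copy of $T$.
   Context: The ND-colouring of $K_{2n+1}$: vertex set $\{0,1,\dots,2n\}$, and the edge $ij$ receives colour $k\in\{1,\dots,n\}$ where $i-j\equiv \pm k \pmod{2n+1}$. A subgraph is rainbow if all its edges have distinct colours. *)

(* Defs.v *)
From mathcomp Require Import all_boot.
Set Implicit Arguments. Unset Strict Implicit. Unset Printing Implicit Defensive.

Definition simple_graph (V : finType) (e : rel V) : Prop :=
  symmetric e /\ irreflexive e.

Definition num_edges (V : finType) (e : rel V) : nat :=
  #|[set p : V * V | e p.1 p.2]| %/ 2.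

Definition is_tree (V : finType) (e : rel V) : Prop :=
  simple_graph e /\ 0 < #|V| /\
  (forall x y : V, connect e x y) /\ num_edges e = #|V| - 1.

Definition degree (V : finType) (e : rel V) (v : V) : nat := #|[set w | e v w]|.

Definition is_leaf (V : finType) (e : rel V) (v : V) : bool := degree e v == 1.

Definition leaf_nbrs (V : finType) (e : rel V) (v : V) : nat :=
  #|[set w | e v w && is_leaf e w]|.

(* ND-colouring of K_{2n+1} on vertex set {0,...,2n}: edge ij gets colour
   k in {1..n} with i - j = +-k (mod 2n+1). *)
Definition nd_colour (n : nat) (i j : 'I_(2 * n + 1)) : nat :=
  let d := (i + (2 * n + 1) - j) %% (2 * n + 1) in minn d (2 * n + 1 - d).
Arguments nd_colour n i j : clear implicits.

Definition rainbow_copy (n : nat) (V : finType) (e : rel V)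
    (f : V -> 'I_(2 * n + 1)) : Prop :=
  injective f /\
  forall x y u w : V, e x y -> e u w ->
    nd_colour n (f x) (f y) = nd_colour n (f u) (f w) ->
    (x = u /\ y = w) \/ (x = w /\ y = u).
Arguments rainbow_copy n {V} e f.

(* Main.v *)
Require Import Defs.
From mathcomp Require Import all_boot zify.
Set Implicit Arguments. Unset Strict Implicit. Unset Printing Implicit Defensive.

Definition dist (a b : nat) := (a - b) + (b - a).

Lemma nd_colourE n (i j : 'I_(2 * n + 1)) :
  nd_colour n i j = minn (dist i j) (2 * n + 1 - dist i j).
Proof.
rewrite /nd_colour /dist.
have hi := ltn_ord i; have hj := ltn_ord j.
case: (leqP j i) => hij.
  have -> : i + (2 * n + 1) - j = (i - j) + (2 * n + 1) by lia.
  rewrite modnDr modn_small; lia.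
rewrite modn_small; lia.
Qed.

Definition ball (V : finType) (e : rel V) (v1 : V) (k : nat) : {set V} :=
  iter k (fun B => B :|: [set y | [exists x in B, e x y]]) [set v1].

Lemma ball_path (V : finType) (e : rel V) (v1 : V) (p : seq V) :
  forall x k, x \in ball e v1 k -> path e x p -> last x p \in ball e v1 (k + size p).
Proof.
elim: p => [|y p IH] x k hx /=; first by rewrite addn0.
move=> /andP[exy hp].
rewrite addnS -addSn; apply: IH hp.
rewrite /= inE; apply/orP; right; rewrite inE; apply/existsP; exists x.
by rewrite hx exy.
Qed.

Lemma exists_parent (V : finType) (e : rel V) (v1 : V) :
  symmetric e -> (forall x, connect e v1 x) ->
  exists (d : V -> nat) (p : V -> V), p v1 = v1 /\
    forall v, v != v1 -> e v (p v) /\ d (p v) < d v.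
Proof.
move=> sym conn.
have dex : forall x, exists k, x \in ball e v1 k.
  move=> x; case/connectP: (conn x) => q hq ->.
  exists (0 + size q); apply: ball_path hq; by rewrite /= inE.
pose d x := ex_minn (dex x).
have dP : forall x, x \in ball e v1 (d x).
  by move=> x; rewrite /d; case: ex_minnP.
have dmin : forall x k, x \in ball e v1 k -> d x <= k.
  by move=> x k; rewrite /d; case: ex_minnP => m _ H /H.
have pex : forall v, v != v1 -> exists u, e v u && (d u < d v).
  move=> v nv.
  have := dP v; case hdv : (d v) => [|k].
    by rewrite /= inE => /eqP; move/eqP: nv.
  rewrite /= inE => /orP[hk|].
    by have := dmin _ _ hk; rewrite hdv ltnn.
  rewrite inE => /existsP[u /andP[hu euv]].
  exists u; rewrite sym euv /=.
  by have := dmin _ _ hu; rewrite ltnS.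
exists d.
exists (fun v => if v == v1 then v1 else odflt v1 [pick u | e v u && (d u < d v)]).
split; first by rewrite eqxx.
move=> v nv; rewrite (negbTE nv).
case: pickP => [u /andP[] //|H].
by case: (pex v nv) => u; rewrite H.
Qed.

Lemma tree_edges (V : finType) (e : rel V) (v1 : V) (d : V -> nat) (p : V -> V) :
  simple_graph e -> 0 < #|V| -> num_edges e = #|V| - 1 ->
  p v1 = v1 -> (forall v, v != v1 -> e v (p v) /\ d (p v) < d v) ->
  forall x y, e x y -> (x != v1 /\ y = p x) \/ (y != v1 /\ x = p y).
Proof.
move=> [sym irr] V0 ne pv1 hp x y exy.
pose E := [set pr : V * V | e pr.1 pr.2].
pose A := [set (v, p v) | v in [set~ v1]].
pose B := [set (p v, v) | v in [set~ v1]].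
have cA : #|A| = #|V| - 1.
  rewrite card_imset ?cardsC1; first lia.
  by move=> u w [].
have cB : #|B| = #|V| - 1.
  rewrite card_imset ?cardsC1; first lia.
  by move=> u w [].
have AB : A :&: B = set0.
  apply/setP => [[a b]]; rewrite !inE.
  apply/negP => /andP[/imsetP[u hu [-> ->]] /imsetP[w hw [e1 e2]]].
  move: hu hw; rewrite !inE => hu hw.
  have := (hp u hu).2; have := (hp w hw).2.
  rewrite -e1 -e2 => h1 h2. lia.
have cAB : #|A :|: B| = 2 * (#|V| - 1) by rewrite cardsU AB cards0; lia.
have ABE : A :|: B \subset E.
  apply/subsetP => [[a b]]; rewrite !inE => /orP[] /imsetP[u hu [-> ->]];
    move: hu; rewrite !inE => hu; case: (hp u hu) => h _ //=.
  by rewrite sym.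
have symAB : forall a b, ((a, b) \in A :|: B) = ((b, a) \in A :|: B).
  suff H : forall a b, (a, b) \in A :|: B -> (b, a) \in A :|: B.
    by move=> a b; apply/idP/idP; apply: H.
  move=> a b; rewrite !inE => /orP[] /imsetP[u hu [-> ->]]; apply/orP.
    by right; apply/imsetP; exists u.
  by left; apply/imsetP; exists u.
case: (boolP ((x, y) \in A :|: B)) => hxy.
  move: hxy; rewrite !inE => /orP[] /imsetP[u hu [-> ->]]; move: hu; rewrite !inE => hu. idtac.
    by left; split; [exact: hu | ].
  by right; split; [exact: hu | ].
exfalso.
have hyx : (y, x) \notin A :|: B by rewrite -symAB.
have nxy : (x, y) != (y, x).
  apply/eqP => [[exy']]; by rewrite exy' irr in exy.
have sub : (A :|: B) :|: [set (x, y); (y, x)] \subset E.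
  rewrite subUset ABE /=; apply/subsetP => z; rewrite !inE => /orP[] /eqP -> //=.
  by rewrite sym.
have := subset_leq_card sub.
rewrite cardsU cards2 nxy cAB.
have -> : (A :|: B) :&: [set (x, y); (y, x)] = set0.
  apply/setP => z; rewrite inE [z \in set0]inE; apply/negP => /andP[hz].
  rewrite !inE => /orP[] /eqP hz'; subst z.
    by rewrite hz in hxy.
  by rewrite hz in hyx.
rewrite cards0.
move: ne; rewrite /num_edges -/E => ne h. lia.
Qed.

Definition Inv (V : finType) (v1 : V) (p : V -> V) (n : nat) (X : {set V}) (g : V -> nat) :=
  g v1 = 0 /\ (forall x, x \in X -> g x <= n) /\ {in X &, injective g} /\
  (forall x y, x \in X -> y \in X -> x != v1 -> y != v1 ->
     dist (g x) (g (p x)) = dist (g y) (g (p y)) -> x = y).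

Lemma embed (V : finType) (v1 : V) (p : V -> V) (d : V -> nat) (n : nat) (W : {set V}) :
  p v1 = v1 -> (forall v, v != v1 -> d (p v) < d v) -> 3 * (#|W| - 1) <= n ->
  forall X : {set V}, v1 \in X -> X \subset W -> (forall x, x \in X -> p x \in X) ->
  exists g : V -> nat, Inv v1 p n X g.
Proof.
move=> pv1 hd hW X.
have [k] := ubnP #|X|; elim: k X => [|k IH] X // hk v1X XW Xp.
case: (boolP (X == [set v1])) => [/eqP -> | hX].
  exists (fun _ => 0); split; first by [].
  split; first by move=> *.
  split; first by move=> a b; rewrite !inE => /eqP -> /eqP ->.
  by move=> a b; rewrite !inE => /eqP -> _; rewrite eqxx.
have [x0 hx0] : exists x, x \in X :\ v1.
  apply/set0Pn; apply: contra hX => /eqP h.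
  apply/eqP/setP => z; rewrite in_set1; apply/idP/idP => [hz|/eqP ->//].
  case: (eqVneq z v1) => [zv|nz]; first by []. have : z \in X :\ v1 by rewrite !inE nz hz.
  by rewrite h inE.
case: (arg_maxnP d hx0) => x hx xmax; have : x \in X :\ v1 := hx; rewrite !inE => /andP[xv1 xX]; clear hx.
set X' := X :\ x.
have v1X' : v1 \in X' by rewrite !inE eq_sym xv1 v1X.
have X'W : X' \subset W by apply: subset_trans XW; apply: subD1set.
have X'p : forall y, y \in X' -> p y \in X'.
  move=> y; rewrite /X' !inE => /andP[yx yX]; rewrite Xp // andbT.
  apply/eqP => pyx.
  case: (eqVneq y v1) => [yv1|yv1].
    by move: xv1; rewrite -pyx yv1 pv1 eqxx.
  have hy : y \in X :\ v1 by rewrite !inE yv1 yX.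
  have := xmax y hy => /= hxy.
  have := hd y yv1; rewrite pyx => h.
  by move: (leq_trans h hxy); rewrite ltnn.
have cX' : #|X'| < k.
  have := cardsD1 x X; rewrite xX /= -/X' => h; by move: hk; rewrite h add1n ltnS.
have [g [g0 [gn [ginj gc]]]] := IH X' cX' v1X' X'W X'p.
have pxx : p x != x by apply/eqP => pxx; have := hd x xv1; rewrite pxx ltnn.
have pxX' : p x \in X' by rewrite /X' !inE pxx Xp.
set a := g (p x).
pose c y := dist (g y) (g (p y)).
pose F : {set 'I_n.+1} := [set inord (g y) | y in X'] :|: [set inord (a + c y) | y in X']
   :|: [set inord (a - c y) | y in X'].
have cF : #|F| < n.+1.
  have h1 : #|[set inord (g y) | y in X'] : {set 'I_n.+1}| <= #|X'| := leq_imset_card _ _.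
  have h2 : #|[set inord (a + c y) | y in X'] : {set 'I_n.+1}| <= #|X'| := leq_imset_card _ _.
  have h3 : #|[set inord (a - c y) | y in X'] : {set 'I_n.+1}| <= #|X'| := leq_imset_card _ _.
  have u1 := leq_card_setU ([set inord (g y) | y in X'] :|: [set inord (a + c y) | y in X'] : {set 'I_n.+1}) [set inord (a - c y) | y in X'].
  have u2 := leq_card_setU ([set inord (g y) | y in X'] : {set 'I_n.+1}) [set inord (a + c y) | y in X'].
  move: u1 u2 => [u1 _] [u2 _].
  have : #|X'| <= #|W| - 1.
    have := subset_leq_card XW; have := cardsD1 x X; rewrite xX /= -/X' => h1' h2'.
    clear -h1' h2'; lia.
  rewrite /F; move: h1 h2 h3 u1 u2 hW.
  set A1 := [set inord (g y) | y in X']; set A2 := [set inord (a + c y) | y in X']; set A3 := [set inord (a - c y) | y in X'].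
  move=> {}h1 {}h2 {}h3 {}u1 {}u2 {}hW hXW; apply: (leq_ltn_trans u1); rewrite ltnS; apply: (leq_trans (leq_add u2 (leqnn _))).
  clear -h1 h2 h3 hW hXW; lia.
have [q qF] : exists q, q \notin F.
  case: (pickP (fun q => q \notin F)) => [q hq|H]; first by exists q.
  have : [set: 'I_n.+1] \subset F by apply/subsetP => q _; have := H q; move/negbFE.
  move/subset_leq_card; rewrite cardsT card_ord; lia.
have qg : forall y, y \in X' -> g y != q.
  move=> y hy; apply/eqP => hq.
  have h : (inord (g y) : 'I_n.+1) \in F.
    by apply/setUP; left; apply/setUP; left; apply: imset_f hy.
  by move: h; rewrite hq inord_val (negbTE qF).
have qc : forall y, y \in X' -> c y != dist q a.
  move=> y hy; apply/eqP => hq.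
  have qn := ltn_ord q.
  case: (leqP a q) => aq.
    have h : (inord (a + c y) : 'I_n.+1) \in F.
      by apply/setUP; left; apply/setUP; right; apply: imset_f hy.
    have e1 : a + c y = q by rewrite hq /dist; clear -aq; lia.
    by move: h; rewrite e1 inord_val (negbTE qF).
  have h : (inord (a - c y) : 'I_n.+1) \in F.
    by apply/setUP; right; apply: imset_f hy.
  have e1 : a - c y = q by rewrite hq /dist; clear -aq; lia.
  by move: h; rewrite e1 inord_val (negbTE qF).
pose g' z := if z == x then val q else g z.
have g'X' : forall z, z \in X' -> g' z = g z.
  by move=> z; rewrite /X' !inE /g' => /andP[/negbTE -> _].
have g'x : g' x = q by rewrite /g' eqxx.
have memX : forall z, z \in X -> z = x \/ z \in X'.
  move=> z hz; case: (eqVneq z x) => [->|zx]; [by left | by right; rewrite /X' !inE zx hz].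
have c'x : dist (g' x) (g' (p x)) = dist q a by rewrite g'x g'X'.
have c'X' : forall z, z \in X' -> dist (g' z) (g' (p z)) = c z.
  by move=> z hz; rewrite !g'X' ?X'p.
exists g'; split; first by rewrite g'X'.
split.
  move=> z /memX[->|hz]; first by rewrite g'x -ltnS.
  by rewrite g'X' // gn.
split.
  move=> z1 z2 /memX[->|h1] /memX[->|h2] //; rewrite ?g'x ?g'X' //.
  - by move=> h; move: (qg _ h2); rewrite h eqxx.
  - by move=> h; move: (qg _ h1); rewrite h eqxx.
  - exact: ginj.
move=> z1 z2 /memX[->|h1] /memX[->|h2] //; rewrite ?c'x ?c'X' //.
- by move=> _ n2 h; move: (qc _ h2); rewrite h eqxx.
- by move=> n1 _ h; move: (qc _ h1); rewrite h eqxx.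
- exact: gc.
Qed.

Lemma pos_N n : 0 < 2 * n + 1. Proof. by rewrite addn1. Qed.
Definition mkI n (x : nat) : 'I_(2 * n + 1) := Ordinal (ltn_pmod x (pos_N n)).
Lemma mkI_val n x : x < 2 * n + 1 -> nat_of_ord (mkI n x) = x.
Proof. by move=> h; rewrite /= modn_small. Qed.

Lemma ar_L1 n a b : a <= n -> b <= n -> minn (dist a b) (2 * n + 1 - dist a b) = dist a b.
Proof. rewrite /dist; lia. Qed.
Lemma ar_L2 n k P : 0 < k <= n -> (P = k \/ P = 2 * n + 1 - k) ->
  minn (dist P 0) (2 * n + 1 - dist P 0) = k /\ minn (dist 0 P) (2 * n + 1 - dist 0 P) = k.
Proof. rewrite /dist; lia. Qed.
Lemma ar_L3 n k1 k2 P1 P2 : 0 < k1 <= n -> 0 < k2 <= n ->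
  (P1 = k1 \/ P1 = 2 * n + 1 - k1) -> (P2 = k2 \/ P2 = 2 * n + 1 - k2) -> P1 = P2 -> k1 = k2.
Proof. lia. Qed.
Lemma distC a b : dist a b = dist b a. Proof. rewrite /dist; lia. Qed.

Unset Implicit Arguments.

Theorem theorem2p3 (n : nat) (V : finType) (e : rel V) (v1 : V) :
  10 ^ 6 <= n ->
  #|V| = n.+1 ->
  is_tree e ->
  2 * n <= 3 * leaf_nbrs e v1 ->
  exists f : V -> 'I_(2 * n + 1), rainbow_copy n e f.
Proof.
move=> _ cV [[sym irr] [V0 [conn ne]]] hL.
have [d [p [pv1 hp]]] := exists_parent sym (conn v1).
have TE := tree_edges (conj sym irr) V0 ne pv1 hp.
pose S := [set w | e v1 w && is_leaf e w].
pose W := ~: S.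
have hS : #|S| = leaf_nbrs e v1 by [].
have leafS : forall s y, s \in S -> e s y -> y = v1.
  move=> s y; rewrite inE => /andP[e1 /eqP hdeg] esy.
  have /cards1P[z hz] : #|[set w | e s w]| == 1 by rewrite -hdeg.
  have h1 : v1 \in [set w | e s w] by rewrite inE sym.
  have h2 : y \in [set w | e s w] by rewrite inE.
  by move: h1 h2; rewrite hz !inE => /eqP -> /eqP ->.
have inW : forall x, (x \in W) = (x \notin S) by move=> x; rewrite inE.
have v1W : v1 \in W by rewrite inW inE irr.
have Wp : forall x, x \in W -> p x \in W.
  move=> x xW; case: (eqVneq x v1) => [->|xv1]; first by rewrite pv1.
  rewrite inW; apply/negP => pS.
  have epx : e (p x) x by rewrite sym; exact: (hp x xv1).1.
  by move: xv1; rewrite (leafS _ _ pS epx) eqxx.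
have cW : #|W| + #|S| = n.+1 by rewrite addnC cardsC cV.
have hWn : 3 * (#|W| - 1) <= n by rewrite -hS in hL; clear -cW hL; lia.
have [g [g0 [gn [ginj gc]]]] := @embed V v1 p d n W pv1 (fun v nv => (hp v nv).2) hWn W v1W (subxx W) Wp.
pose cw y := dist (g y) (g (p y)).
pose C : {set 'I_n.+1} := [set inord (cw y) | y in W].
pose U := ~: C.
have cU : #|S| <= #|U|.
  have h1 : #|C| <= #|W| := leq_imset_card _ _.
  have h2 := cardsC C. rewrite /U; clear -h1 h2 cW; rewrite card_ord in h2; lia.
have CU : forall u, u \in U -> u \notin C by move=> u; rewrite inE.
have zC : (ord0 : 'I_n.+1) \in C.
  have -> : (ord0 : 'I_n.+1) = inord (cw v1) by apply: val_inj; rewrite /cw pv1 /dist !subnn /= inordK.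
  exact: imset_f.
pose sU := [seq val i | i <- enum U].
have sUu : uniq sU by rewrite map_inj_uniq ?enum_uniq //; apply: val_inj.
have sUs : size sU = #|U| by rewrite size_map -cardE.
pose k s := nth 0 sU (index s (enum S)).
have kU : forall s, s \in S -> exists2 u, u \in U & nat_of_ord u = k s.
  move=> s sS.
  have hi : index s (enum S) < size sU by rewrite sUs; apply: leq_trans cU; rewrite cardE index_mem mem_enum.
  have := mem_nth 0 hi; rewrite -/(k s) => /mapP[u]; rewrite mem_enum => uU ->.
  by exists u.
have kinj : forall s1 s2, s1 \in S -> s2 \in S -> k s1 = k s2 -> s1 = s2.
  move=> s1 s2 h1 h2 hk.
  have i1 : index s1 (enum S) < size sU by rewrite sUs; apply: leq_trans cU; rewrite cardE index_mem mem_enum.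
  have i2 : index s2 (enum S) < size sU by rewrite sUs; apply: leq_trans cU; rewrite cardE index_mem mem_enum.
  move/eqP: hk; rewrite /k nth_uniq // => /eqP hi.
  have e1 : nth s1 (enum S) (index s1 (enum S)) = s1 by rewrite nth_index ?mem_enum.
  have e2 : nth s1 (enum S) (index s2 (enum S)) = s2 by rewrite nth_index ?mem_enum.
  by rewrite -e1 hi e2.
have kb : forall s, s \in S -> 0 < k s <= n.
  move=> s /kU[u uU <-]; have := ltn_ord u; rewrite ltnS => ->; rewrite andbT lt0n.
  apply/negP => /eqP u0.
  have : u = ord0 by apply: val_inj.
  by move=> uo; move: (CU u uU); rewrite uo zC.
have knotc : forall s y, s \in S -> y \in W -> k s != cw y.
  move=> s y sS yW; apply/eqP => hk.
  case: (kU s sS) => u uU hu.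
  have : u = inord (cw y) by rewrite -hk -hu inord_val.
  move=> ue; move: (CU u uU); rewrite ue.
  by rewrite (imset_f (fun y => inord (cw y) : 'I_n.+1) yW).
pose pos s := if [exists w in W, g w == k s] then 2 * n + 1 - k s else k s.
have posv : forall s, pos s = k s \/ pos s = 2 * n + 1 - k s.
  by move=> s; rewrite /pos; case: ifP; [right | left].
have posW : forall s y, s \in S -> y \in W -> pos s != g y.
  move=> s y sS yW; rewrite /pos; case: ifP => hex.
    have := gn y yW; have := kb s sS; clear; lia.
  apply/eqP => hk; move/negbT: hex; rewrite negb_exists => /forallP /(_ y).
  by rewrite yW hk eqxx.
pose fv v := if v \in S then pos v else g v.
have fvb : forall v, fv v < 2 * n + 1.
  move=> v; rewrite /fv; case: ifP => vS.
    have := kb v vS; have := posv v; clear; lia.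
  have := gn v; rewrite inW vS => /(_ erefl); clear; lia.
pose f v := mkI n (fv v).
have fE : forall v, nat_of_ord (f v) = fv v by move=> v; rewrite mkI_val.
have v1S : (v1 \in S) = false by apply/negbTE; rewrite -inW.
pose col x y := if x \in S then k x else if y \in S then k y else dist (g x) (g y).
have colE : forall x y, e x y -> nd_colour n (f x) (f y) = col x y.
  move=> x y exy; rewrite nd_colourE !fE /fv /col.
  case xS: (x \in S).
    rewrite (leafS x y xS exy) v1S g0.
    exact: (ar_L2 (kb x xS) (posv x)).1.
  case yS: (y \in S).
    have eyx : e y x by rewrite sym.
    rewrite (leafS y x yS eyx) g0.
    exact: (ar_L2 (kb y yS) (posv y)).2.
  apply: ar_L1; apply: gn; by rewrite inW ?xS ?yS.
have Wedge : forall x y, e x y -> x \in W -> y \in W -> exists a,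
    [/\ a \in W, a != v1, dist (g x) (g y) = cw a & ((x = a /\ y = p a) \/ (y = a /\ x = p a))].
  move=> x y exy xW yW; case: (TE x y exy) => [[xv ye]|[yv xe]].
    by exists x; split => //; [rewrite /cw ye | left].
  by exists y; split => //; [rewrite /cw xe distC | right].
exists f; split.
  move=> x y hxy; have := congr1 (@nat_of_ord _) hxy; rewrite !fE /fv.
  case xS: (x \in S); case yS: (y \in S).
  - by move=> h; apply: kinj => //; apply: (ar_L3 (kb x xS) (kb y yS) (posv x) (posv y) h).
  - by move=> h; have := posW x y xS; rewrite inW yS h eqxx => /(_ erefl).
  - by move=> h; have := posW y x yS; rewrite inW xS h eqxx => /(_ erefl).
  - by apply: ginj; rewrite inW ?xS ?yS.
move=> x y u w exy euw; rewrite !colE // /col.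
have W_of : forall z, z \in S = false -> z \in W by move=> z hz; rewrite inW hz.
case xS: (x \in S).
  have yv := leafS x y xS exy.
  case uS: (u \in S).
    have wv := leafS u w uS euw.
    by move/(kinj _ _ xS uS) => ->; left; rewrite yv wv.
  case wS: (w \in S).
    have ewu : e w u by rewrite sym.
    have uv := leafS w u wS ewu.
    by move/(kinj _ _ xS wS) => ->; right; rewrite yv uv.
  have [a [aW av1 -> _]] := Wedge u w euw (W_of _ uS) (W_of _ wS).
  by move=> h; move: (knotc x a xS aW); rewrite h eqxx.
case yS: (y \in S).
  have eyx : e y x by rewrite sym.
  have xv := leafS y x yS eyx.
  case uS: (u \in S).
    have wv := leafS u w uS euw.
    by move/(kinj _ _ yS uS) => ->; right; rewrite xv wv.
  case wS: (w \in S).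
    have ewu : e w u by rewrite sym.
    have uv := leafS w u wS ewu.
    by move/(kinj _ _ yS wS) => ->; left; rewrite xv uv.
  have [a [aW av1 -> _]] := Wedge u w euw (W_of _ uS) (W_of _ wS).
  by move=> h; move: (knotc y a yS aW); rewrite h eqxx.
have [a [aW av1 -> ha]] := Wedge x y exy (W_of _ xS) (W_of _ yS).
case uS: (u \in S).
  by move=> h; move: (knotc u a uS aW); rewrite h eqxx.
case wS: (w \in S).
  by move=> h; move: (knotc w a wS aW); rewrite h eqxx.
have [b [bW bv1 -> hb]] := Wedge u w euw (W_of _ uS) (W_of _ wS).
move=> hab; have eab := gc a b aW bW av1 bv1 hab; subst b.
case: ha => [[-> ->]|[-> ->]]; case: hb => [[-> ->]|[-> ->]]; by [left | right].
Qed.
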